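(* Let $R$ be an associative ring with identity and involution $*$, and let $a\in R^{\#}\cap R^{\dagger}$. Then the following are equivalent: (1) $a\in R^{SEP}$; (2) $a(a^{\#})^*a^{\dagger}$ is a right $a^{\dagger}a^2$-idempotent; (3) $a^{\dagger}a^2$ is a left $a(a^{\#})^*a^{\dagger}$-idempotent; (4) $a^{\dagger}a^2$ is a right $a(a^{\#})^*a^{\dagger}$-idempotent.
   Context: An involution on $R$ is a map $x\mapsto x^*$ with $(x^* )^*=x$, $(x+y)^*=x^*+y^*$, $(xy)^*=y^*x^*$. An element $a$ is Moore–Penrose invertible if there is $b$ with $aba=a$, $bab=b$, $(ab)^*=ab$, $(ba)^*=ba$; such $b$ is unique, denoted $a^{\dagger}$, and $R^{\dagger}$ is the set of such $a$. An element $a$ is group invertible if there is $b$ with $aba=a$, $bab=b$, $ab=ba$; such $b$ is unique, denoted $a^{\#}$, and $R^{\#}$ is the set of such $a$. For $a\in R^{\#}\cap R^{\dagger}$, $a$ is SEP if $a^*=a^{\dagger}=a^{\#}$; $R^{SEP}$ denotes the set of SEP elements. For $e,c\in R$, $e$ is a left $c$-idempotent if $e^2=ce$, and a right $c$-idempotent if $e^2=ec$. *)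

(* Defs.v *)
From mathcomp Require Import all_boot all_algebra.
Set Implicit Arguments. Unset Strict Implicit. Unset Printing Implicit Defensive.
Import GRing.Theory.
Local Open Scope ring_scope.

Definition involution (R : pzRingType) (star : R -> R) : Prop :=
  [/\ forall x, star (star x) = x,
      forall x y, star (x + y) = star x + star y &
      forall x y, star (x * y) = star y * star x].

Definition is_mp_inv (R : pzRingType) (star : R -> R) (a b : R) : Prop :=
  [/\ a * b * a = a, b * a * b = b, star (a * b) = a * b & star (b * a) = b * a].

Definition is_group_inv (R : pzRingType) (a b : R) : Prop :=
  [/\ a * b * a = a, b * a * b = b & a * b = b * a].

Definition is_SEP (R : pzRingType) (star : R -> R) (a : R) : Prop :=
  exists b c, [/\ is_mp_inv star a b, is_group_inv a c, star a = b & b = c].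

Definition left_c_idem (R : pzRingType) (c e : R) : Prop := e * e = c * e.
Definition right_c_idem (R : pzRingType) (c e : R) : Prop := e * e = e * c.

(* Main.v *)
Require Import Defs.
From mathcomp Require Import all_boot all_algebra.
Import GRing.Theory.
Local Open Scope ring_scope.
Set Implicit Arguments. Unset Strict Implicit.

Lemma lext (R : pzRingType) (u v w t : R) : u*v*w = t -> forall z, z*u*v*w = z*t.
Proof. by move=> H z; rewrite -H !mulrA. Qed.
Lemma lext2 (R : pzRingType) (u v t : R) : u*v = t -> forall z, z*u*v = z*t.
Proof. by move=> H z; rewrite -H !mulrA. Qed.

Lemma mp_uniq (R : pzRingType) (s : R -> R) (a b c : R) :
  (forall x y, s (x * y) = s y * s x) ->
  is_mp_inv s a b -> is_mp_inv s a c -> b = c.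
Proof.
move=> sM [b1 b2 b3 b4] [c1 c2 c3 c4].
have ab : a*b = a*c.
  have e : a*b = a*c*(a*b) by rewrite mulrA c1.
  by rewrite e -c3 -b3 -sM mulrA b1.
have ba : b*a = c*a.
  have e : b*a = b*a*(c*a) by rewrite mulrA (lext c1).
  by rewrite e -c4 -b4 -sM mulrA (lext b1).
by rewrite -b2 ba -mulrA ab mulrA c2.
Qed.

Lemma grp_uniq (R : pzRingType) (a b c : R) :
  is_group_inv a b -> is_group_inv a c -> b = c.
Proof.
move=> [b1 b2 b3] [c1 c2 c3].
have ca : c*a = b*a.
  by rewrite -{1}b1 !mulrA -mulrA -c3 -b3 mulrA c1.
by rewrite -c2 ca -mulrA c3 ca -b3 mulrA b2.
Qed.

Lemma core (R : pzRingType) (s : R -> R) (a d g : R) :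
  (forall x, s (s x) = x) -> (forall x y, s (x * y) = s y * s x) ->
  a*d*a = a -> d*a*d = d -> s (a*d) = a*d -> s (d*a) = d*a ->
  a*g*a = a -> g*a*g = g -> a*g = g*a ->
  a*d = a*g -> d = g /\ (a * s g * g = a -> s a = g).
Proof.
move=> sK sM H1 H2 H3 H4 G1 G2 G3 pe.
have H1r := lext H1; have H2r := lext H2; have G1r := lext G1; have G2r := lext G2.
have G3r := lext2 G3.
have qe : d*a*(a*g) = d*a by rewrite !mulrA -mulrA G3 mulrA G1r.
have eq : a*g*(d*a) = a*g by rewrite G3 !mulrA H1r.
have qp : d*a = d*a*(a*d) by rewrite pe qe.
have qpq : d*a = a*d*(d*a) by rewrite -{1}H4 {1}qp sM H3 H4.
have qeq : d*a = a*g by rewrite qpq pe eq.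
have dg : d = g.
  by rewrite -H2 qeq G3 -mulrA pe mulrA G2.
split=> // hx.
subst d.
have sg : s g = a*g*s g by rewrite -{1}G2 -mulrA sM H3.
have e1 : a*g = s g * g by rewrite G3 -{1}hx !mulrA -G3 -sg.
by rewrite -{1}G1 sM H3 e1 mulrA -sM -G3 H3 G3 G2.
Qed.

Lemma main (R : pzRingType) (s : R -> R) (a d g : R) :
  involution s -> is_mp_inv s a d -> is_group_inv a g ->
  [/\ (is_SEP s a <-> right_c_idem (d * a ^+ 2) (a * s g * d)),
      (is_SEP s a <-> left_c_idem (a * s g * d) (d * a ^+ 2)) &
      (is_SEP s a <-> right_c_idem (a * s g * d) (d * a ^+ 2))].
Proof.
move=> [sK sD sM] mp gi.
have [H1 H2 H3 H4] := mp; have [G1 G2 G3] := gi.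
have H1r := lext H1; have H2r := lext H2; have G1r := lext G1; have G2r := lext G2.
have Ga : g*a*a = a by rewrite -G3 G1.
have Gar := lext Ga.
have aag : a*a*g = a by rewrite -mulrA G3 mulrA G1.
have aagr := lext aag.
have gga : g*g*a = g by rewrite -mulrA -G3 mulrA G2.
have ggar := lext gga.
have core' := core sK sM H1 H2 H3 H4 G1 G2 G3.
have fwd : is_SEP s a -> a * s g * d = a /\ d * a ^+ 2 = a.
  move=> [b [c [mpb gic sa bc]]].
  have db : d = b := mp_uniq sM mp mpb.
  have gc : g = c := grp_uniq gi gic.
  have sg : s g = a by rewrite gc -bc -sa sK.
  have dg : d = g by rewrite db bc gc.
  by rewrite sg dg expr2 mulrA aag Ga.
have bwd : a*d = a*g -> (d = g -> a * s g * g = a) -> is_SEP s a.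
  move=> pe hx; have [dg hs] := core' pe.
  exists d, g; split => //; rewrite dg; apply: hs; exact: hx.
split; split.
- by move/fwd => [-> ->].
- rewrite /right_c_idem expr2 => hxx.
  have gq : g*d*a = g by rewrite -{1}gga H1r gga.
  have F1 : d*a*s g = s g by rewrite -{2}gq -[g*d*a]mulrA sM H4.
  have F1r := lext F1.
  have F2 : s a*s g*d = d.
    by rewrite -sM -{1}H2 -H4 [s (d*a)]sM !mulrA -sM mulrA G1 -sM H4 H2.
  have canc : forall u, s a*(d*a*s g*d*u) = d*u.
    by move=> u; rewrite !mulrA F1r F2.
  have h2 : d*(a*s g*d) = d*(d*(a*a)).
    rewrite -(canc (a*s g*d)) -(canc (d*(a*a))); congr (_ * _).
    by move: (congr1 (fun t => d*t) hxx); rewrite /= !mulrA => ->.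
  have h3 : s g*d = d*d*a*a by move: h2; rewrite !mulrA F1.
  have hd : d = s a*d*d*a*a by rewrite -{1}F2 -mulrA h3 !mulrA.
  have dag : d*a*g = d by rewrite {1}hd aagr -hd.
  apply: bwd.
    by rewrite -dag !mulrA H1.
  by move=> dg; rewrite -{2}dg -mulrA h3 !mulrA dg ggar G1.
- by move/fwd => [-> ->].
- rewrite /left_c_idem expr2 => hyy.
  have h : d*a*a = a*s g*d*d*a.
    by have := congr1 (fun t => t*g) hyy; rewrite /= ?mulrA !aagr H1r.
  have h2 : a*d*d*a*a = d*a*a.
    by have := congr1 (fun t => a*d*t) h; rewrite /= ?mulrA H1 -h.
  have h3 : a*d*d*a = d*a.
    by have := congr1 (fun t => t*g) h2; rewrite /= ?mulrA !aagr.
  have h4 : a*d*d = d.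
    by have := congr1 (fun t => t*d) h3; rewrite /= ?mulrA H2r H2.
  have h5 : a*g*d = d by rewrite -{1}h4 !mulrA G1 h4.
  have h6 : d*a = a*g by rewrite -{1}h5 G3 H1r.
  have se : s (a*g) = a*g by rewrite -h6 H4.
  apply: bwd.
    have t1 : a*d*(a*g) = a*g by rewrite mulrA H1.
    have t2 : a*g*(a*d) = a*g by rewrite -{1}se -H3 -sM t1 se.
    by rewrite -{1}G1 -mulrA t2.
  by move=> dg; move: h; rewrite dg Ga ggar => <-.
- by move/fwd => [-> ->].
- rewrite /right_c_idem expr2 => hyy.
  have h0 : a*a*a = a*a*a*s g*d.
    by have := congr1 (fun t => a*t) hyy; rewrite /= ?mulrA H1 H1r.
  have h : a = a*s g*d.
    by have := congr1 (fun t => g*g*t) h0; rewrite /= ?mulrA gga Ga.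
  have h2 : a*a*d = a by rewrite {1}h H2r -h.
  apply: bwd.
    by have := congr1 (fun t => g*t) h2; rewrite /= ?mulrA Ga => ->; rewrite G3.
  by move=> dg; rewrite {2}h dg.
Qed.

Theorem theorem3p3 (R : pzRingType) (star : R -> R) (a ad ag : R) :
  involution star -> is_mp_inv star a ad -> is_group_inv a ag ->
  [/\ (is_SEP star a <-> right_c_idem (ad * a ^+ 2) (a * star ag * ad)),
      (is_SEP star a <-> left_c_idem (a * star ag * ad) (ad * a ^+ 2)) &
      (is_SEP star a <-> right_c_idem (a * star ag * ad) (ad * a ^+ 2))].
Proof. exact: main. Qed.
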